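(* Let $\mathcal S=\{x\in\mathbb R^n:x^TMx-2\beta^Tx+\gamma\le0\}$ be a paraboloid, let $\lambda_1$ be the largest eigenvalue of $M$, and let $u_n$ be the unit vector with $Mu_n=0$ and $\beta^Tu_n>0$ (so that $\mathrm{rec.cone}(\mathcal S)=\{tu_n:t\ge0\}$). (i) For every boundary point $\check x$ of $\mathcal S$ with $\|M\check x-\beta\|_2\ge\lambda_1\frac{\sqrt n}{2}$, there is $x\in\mathcal S\cap\mathbb Z^n$ with $\|x-\check x\|_2\le\sqrt n$. (ii) Let $\alpha\in\mathbb R^n$ with $u_n^T\alpha>0$, and let $\hat x$ be the minimizer of $\alpha^Tx$ over $\mathcal S$. Then $\dfrac{u_n^T\alpha}{\|\alpha\|_2}\le\dfrac{u_n^T\beta}{\lambda_1\sqrt n/2}$ holds if and only if $\|M\hat x-\beta\|_2\ge\lambda_1\frac{\sqrt n}2$; and in that case $$\min_{x\in\mathcal S\cap\mathbb Z^n}\alpha^Tx-\min_{x\in\mathcal S}\alpha^Tx\le\|\alpha\|_2\sqrt n .$$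
   Context: Paraboloid: $M\in\mathbb S^n$ is positive semidefinite of rank $n-1$, $\beta\in\mathbb R^n$, $\gamma\in\mathbb R$, and the linear system $Mx=\beta$ has no solution. *)

(* Defs.v *)
From HB Require Import structures.
From mathcomp Require Import all_boot all_order all_algebra.
From mathcomp Require Import reals.
Set Implicit Arguments. Unset Strict Implicit. Unset Printing Implicit Defensive.
Import Order.TTheory GRing.Theory Num.Theory.
Local Open Scope ring_scope.

Section Defs.
Variables (R : realType) (n : nat).

Definition dotv (u v : 'cV[R]_n) : R := \sum_(i < n) u i 0 * v i 0.

Definition norm2 (v : 'cV[R]_n) : R := Num.sqrt (dotv v v).

Definition in_par (M : 'M[R]_n) (beta : 'cV[R]_n) (gamma : R) (x : 'cV[R]_n) : Prop :=
  dotv x (M *m x) - 2 * dotv beta x + gamma <= 0.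

Definition paraboloid_data (M : 'M[R]_n) (beta : 'cV[R]_n) : Prop :=
  [/\ M^T = M,
      (forall x : 'cV[R]_n, 0 <= dotv x (M *m x)),
      \rank M = n.-1
    & ~ (exists x : 'cV[R]_n, M *m x = beta)].

Definition largest_eigenvalue (M : 'M[R]_n) (lambda : R) : Prop :=
  eigenvalue M lambda /\ (forall a, eigenvalue M a -> a <= lambda).

Definition boundary_pt (P : 'cV[R]_n -> Prop) (x : 'cV[R]_n) : Prop :=
  forall e : R, 0 < e ->
    (exists y, P y /\ norm2 (y - x) < e) /\ (exists z, ~ P z /\ norm2 (z - x) < e).

Definition int_vec (x : 'cV[R]_n) : Prop := forall i, x i 0 \is a Num.int.

End Defs.

(* Main.v *)
Require Import Defs.
From HB Require Import structures.
From mathcomp Require Import all_boot all_order all_algebra.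
From mathcomp Require Import reals.
From mathcomp Require Import complex spectral sesquilinear.
From mathcomp Require Import ring lra.
Import Order.TTheory GRing.Theory Num.Theory.
Local Open Scope ring_scope.


Lemma mx00E (T : pzSemiRingType) n (a b : 'cV[T]_n) :
  (a^T *m b) 0 0 = \sum_(i < n) a i 0 * b i 0.
Proof. by rewrite !mxE; apply: eq_bigr => i _; rewrite mxE. Qed.

Section Spec.
Context {R : realType}.

Lemma spec {n} (A : 'M[R]_n) : A^T = A ->
  exists d : 'I_n -> R, (forall i, eigenvalue A (d i)) /\
   forall x : 'cV[R]_n, exists c : 'I_n -> R,
    [/\ (forall i, 0 <= c i), dotv x x = \sum_i c i &
        dotv x (A *m x) = \sum_i d i * c i].
Proof.
move=> As.
pose f : {rmorphism R -> R[i]} := real_complex R.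
have fr (a : R) : f a \is Num.real by rewrite /f /= complex_real.
pose AC := map_mx f A.
have Areal : AC \is a realmx by apply/mxOverP => i j; rewrite mxE.
have Asym : AC \is symmetricmx.
  apply/is_hermitianmxP; rewrite expr0 scale1r map_mx_id // /AC.
  by apply/matrixP => i j; rewrite !mxE -{1}As mxE.
have Aherm := realsym_hermsym Asym Areal.
have /orthomx_spectralP AE := hermitian_normalmx Aherm.
set P := spectralmx AC in AE; set D := spectral_diag AC in AE.
have Dreal := hermitian_spectral_diag_real Aherm.
have Pu : P \is unitarymx := spectral_unitarymx AC.
have Punit : P \in unitmx := spectral_unit AC.
exists (fun i => complex.Re (D 0 i)).
have DE i : D 0 i = f (complex.Re (D 0 i)).
  have -> : f (complex.Re (D 0 i)) = Num.Theory.Re (D 0 i) by exact: complexRe.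
  by apply/esym/Creal_ReP; exact: (mxOverP Dreal).
split.
  move=> i; rewrite eigenvalue_root_char /root -(fmorph_eq0 f) -horner_map.
  rewrite map_char_poly -/AC (_ : _.[_] = (char_poly AC).[D 0 i]); last by congr (_.[_]); exact: (esym (DE i)).
  rewrite -/(root _ _) -eigenvalue_root_char.
  apply/eigenvalueP; exists (row i P).
    rewrite -row_mul AE !mulmxA mulmxV // mul1mx row_mul row_diag_mx.
    by rewrite -scalemxAl -rowE.
  apply/negP => /eqP h.
  have : row i P *m invmx P = 0 by rewrite h mul0mx.
  rewrite rowE.
  rewrite mulmxK // => /matrixP /(_ 0 i); rewrite !mxE !eqxx /= => /eqP.
  by rewrite oner_eq0.
move=> x; pose xC := map_mx f x; pose y := P *m xC.
have key (E : 'rV_n) : (xC^T *m (invmx P *m diag_mx E *m P) *m xC) 0 0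
     = \sum_i E 0 i * `|y i 0| ^+ 2.
  have hx : xC^T *m invmx P = (map_mx Num.conj y)^T.
    rewrite invmx_unitary // /y map_mxM trmx_mul map_trmx; congr (_ *m _).
    apply/matrixP => i j; rewrite !mxE.
    by apply/esym/conj_Creal.
    by rewrite map_trmx.
  rewrite !mulmxA hx -mulmxA [LHS]mxE; apply: eq_bigr => i _.
  rewrite mul_mx_diag !mxE normCK; ring.
have cE i : f (complex.Re (`|y i 0| ^+ 2)) = `|y i 0| ^+ 2.
  have -> : f (complex.Re (`|y i 0| ^+ 2)) = Num.Theory.Re (`|y i 0| ^+ 2) by exact: complexRe.
  by apply/Creal_ReP; rewrite realX // normr_real.
exists (fun i => complex.Re (`|y i 0| ^+ 2)); split.
- by move=> i; rewrite -ler0c; move: (cE i); rewrite /f => ->; rewrite exprn_ge0.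
- apply: (fmorph_inj f); rewrite /dotv !rmorph_sum.
  under [RHS]eq_bigr do rewrite cE.
  transitivity (\sum_i (const_mx 1 : 'rV_n) 0 i * `|y i 0| ^+ 2); last first.
    by apply: eq_bigr => i _; rewrite mxE mul1r.
  rewrite -key diag_const_mx mulmx1 mulVmx // mulmx1 mx00E.
  by apply: eq_bigr => i _; rewrite rmorphM !mxE.
- apply: (fmorph_inj f); rewrite /dotv !rmorph_sum.
  under [RHS]eq_bigr do rewrite rmorphM cE -DE.
  rewrite -key -AE.
  rewrite -mulmxA mx00E; apply: eq_bigr => i _.
  by rewrite rmorphM !mxE rmorph_sum; congr (_ * _); apply: eq_bigr => j _; rewrite rmorphM !mxE.
Qed.
End Spec.

Section Basic.
Context {R : realType} {n : nat}.
Local Notation dot := (@dotv R n).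
Implicit Types (a b c x y : 'cV[R]_n) (M : 'M[R]_n).

Lemma dotC a b : dot a b = dot b a.
Proof. by apply: eq_bigr => i _; rewrite mulrC. Qed.
Lemma dotDl a b c : dot (a + b) c = dot a c + dot b c.
Proof. by rewrite /dotv -big_split; apply: eq_bigr => i _; rewrite !mxE mulrDl. Qed.
Lemma dotDr a b c : dot c (a + b) = dot c a + dot c b.
Proof. by rewrite dotC dotDl !(dotC c). Qed.
Lemma dotZl (t : R) a b : dot (t *: a) b = t * dot a b.
Proof. by rewrite /dotv mulr_sumr; apply: eq_bigr => i _; rewrite !mxE mulrA. Qed.
Lemma dotZr (t : R) a b : dot b (t *: a) = t * dot b a.
Proof. by rewrite dotC dotZl dotC. Qed.
Lemma dotNl a b : dot (- a) b = - dot a b.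
Proof. by rewrite -scaleN1r dotZl mulN1r. Qed.
Lemma dotNr a b : dot b (- a) = - dot b a.
Proof. by rewrite dotC dotNl dotC. Qed.
Lemma dotBl a b c : dot (a - b) c = dot a c - dot b c.
Proof. by rewrite dotDl dotNl. Qed.
Lemma dotBr a b c : dot c (a - b) = dot c a - dot c b.
Proof. by rewrite dotDr dotNr. Qed.
Lemma dot0l a : dot 0 a = 0.
Proof. by rewrite /dotv big1 // => i _; rewrite mxE mul0r. Qed.
Lemma dot0r a : dot a 0 = 0.
Proof. by rewrite dotC dot0l. Qed.
Lemma dotE a b : dot a b = (a^T *m b) 0 0.
Proof. by rewrite !mxE; apply: eq_bigr => i _; rewrite mxE. Qed.
Lemma dotM M a b : dot a (M *m b) = dot (M^T *m a) b.
Proof. by rewrite !dotE trmx_mul trmxK mulmxA. Qed.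
Lemma dotMs M a b : M^T = M -> dot a (M *m b) = dot b (M *m a).
Proof. by move=> Ms; rewrite dotM Ms dotC. Qed.
Lemma dot_ge0 a : 0 <= dot a a.
Proof. by apply: sumr_ge0 => i _; rewrite -expr2 sqr_ge0. Qed.
Lemma coord_le a i : a i 0 ^+ 2 <= dot a a.
Proof.
rewrite /dotv (bigD1 i) //= -expr2 lerDl; apply: sumr_ge0 => j _.
by rewrite -expr2 sqr_ge0.
Qed.
Lemma dot_eq0 a : dot a a = 0 -> a = 0.
Proof.
move=> h; apply/matrixP => i j; rewrite ord1 mxE; apply/eqP.
by rewrite -sqrf_eq0 eq_le sqr_ge0 andbT -h coord_le.
Qed.
Lemma CS a b : dot a b ^+ 2 <= dot a a * dot b b.
Proof.
have [a0|apos] := eqVneq (dot a a) 0.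
  by rewrite (dot_eq0 _ a0) dot0l dot0r expr0n mul0r.
have ha : 0 < dot a a by rewrite lt_def apos dot_ge0.
pose t := dot a b / dot a a.
have e : dot (b - t *: a) (b - t *: a) =
   dot b b - 2 * t * dot a b + t ^+ 2 * dot a a.
  by rewrite dotBl !dotBr !dotZl !dotZr (dotC b a); ring.
have := dot_ge0 (b - t *: a); rewrite e /t.
set s := dot a a; set p := dot a b; set q := dot b b => h.
have : 0 <= s * (q - 2 * (p / s) * p + (p / s) ^+ 2 * s) by rewrite mulr_ge0 // ltW.
have -> : s * (q - 2 * (p / s) * p + (p / s) ^+ 2 * s) = s * q - p ^+ 2.
  by field.
by rewrite subr_ge0.
Qed.
Lemma norm2_ge0 a : 0 <= norm2 a. Proof. exact: sqrtr_ge0. Qed.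
Lemma norm2_sq a : norm2 a ^+ 2 = dot a a.
Proof. by rewrite sqr_sqrtr // dot_ge0. Qed.
Lemma dot_le_norm a b : dot a b <= norm2 a * norm2 b.
Proof.
have [h|h] := lerP (dot a b) 0.
  by apply: le_trans h _; rewrite mulr_ge0 // norm2_ge0.
rewrite -(ger0_norm (ltW h)) -sqrtr_sqr /norm2 -sqrtrM ?dot_ge0 //.
by rewrite ler_sqrt ?mulr_ge0 ?dot_ge0 // CS.
Qed.
End Basic.

Section Mat.
Context {R : realType} {n : nat}.
Local Notation dot := (@dotv R n).
Implicit Types (a b c x y u : 'cV[R]_n) (M : 'M[R]_n).

Lemma eigvec M e : M^T = M -> eigenvalue M e ->
  exists x, x != 0 /\ M *m x = e *: x.
Proof.
move=> Ms /eigenvalueP [v hv vn0]; exists v^T; split.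
  by apply: contra vn0 => /eqP h; rewrite -(trmxK v) h trmx0.
by rewrite -{1}Ms -trmx_mul hv linearZ.
Qed.

Lemma rayleigh_up M L : M^T = M -> (forall e, eigenvalue M e -> e <= L) ->
  forall x, dot x (M *m x) <= L * dot x x.
Proof.
move=> Ms hL x; have [d [hd /(_ x) [c [c0 -> ->]]]] := spec _ Ms.
rewrite mulr_sumr; apply: ler_sum => i _; rewrite ler_wpM2r //; exact: hL.
Qed.

Lemma psd_ker M x : M^T = M -> (forall y, 0 <= dot y (M *m y)) ->
  dot x (M *m x) = 0 -> M *m x = 0.
Proof.
move=> Ms psd h0; apply: dot_eq0.
set p := dot (M *m x) (M *m x); set q := dot (M *m x) (M *m (M *m x)).
have q0 : 0 <= q by apply: psd.
have p0 : 0 <= p by apply: dot_ge0.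
have key s : 0 <= - 2 * s * p + s ^+ 2 * q.
  have := psd (x - s *: (M *m x)).
  rewrite mulmxBr -scalemxAr dotBl !dotBr !dotZl !dotZr h0.
  rewrite (dotMs _ x (M *m x) Ms) -/p -/q; move=> h.
  have e : 0 - s * p - (s * p - s * (s * q)) = - 2 * s * p + s ^+ 2 * q by ring.
  by rewrite -e.
apply/eqP; rewrite eq_le p0 andbT; rewrite leNgt; apply/negP => pp.
have := key (p / (q + 1)).
have hq1 : 0 < q + 1 by lra.
set t := p / (q + 1).
have ht : t * (q + 1) = p by rewrite /t mulfVK // gt_eqF.
have t0 : 0 < t by rewrite /t divr_gt0.
nra.
Qed.

Lemma ker1 M u x : M^T = M -> \rank M = n.-1 -> M *m u = 0 -> dot u u = 1 ->
  M *m x = 0 -> x = dot u x *: u.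
Proof.
move=> Ms rk Mu uu Mx.
have n0 : (0 < n)%N.
  case: n u uu {rk Mu Mx x M Ms} => // u; rewrite /dotv big_ord0 => /eqP.
  by rewrite eq_sym oner_eq0.
have hu : (u^T <= kermx M)%MS by apply/sub_kermxP; rewrite -{1}Ms -trmx_mul Mu trmx0.
have hx : (x^T <= kermx M)%MS by apply/sub_kermxP; rewrite -{1}Ms -trmx_mul Mx trmx0.
have un0 : u^T != 0.
  apply/eqP => h; move: uu; rewrite -(trmxK u) h trmx0 dot0l => /eqP.
  by rewrite eq_sym oner_eq0.
have KU : (kermx M <= u^T)%MS.
  case: (mxrank_leqif_sup hu) => _ <-; rewrite mxrank_ker rk rank_rV un0.
  by case: (n) n0 => // k _; rewrite /= subSnn.
have /submxP [D hD] := submx_trans hx KU.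
have -> : x = D 0 0 *: u.
  by apply: trmx_inj; rewrite hD linearZ /= {1}(mx11_scalar D) mul_scalar_mx.
by rewrite dotZr uu mulr1.
Qed.
End Mat.

Section Geo.
Context {R : realType} {n : nat}.
Local Notation dot := (@dotv R n).
Implicit Types (a b c x y u w z : 'cV[R]_n) (M Q : 'M[R]_n).

Lemma dot_gt0 x : x != 0 -> 0 < dot x x.
Proof.
by move=> xn0; rewrite lt_def dot_ge0 andbT; apply: contra xn0 => /eqP/dot_eq0 ->.
Qed.

Lemma posdef_bound Q : Q^T = Q -> (forall x, x != 0 -> 0 < dot x (Q *m x)) ->
  exists2 mu, 0 < mu & forall x, mu * dot x x <= dot x (Q *m x).
Proof.
move=> Qs hQ; have [d [hd hx]] := spec _ Qs.
have dpos i : 0 < d i.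
  have [x [xn0 Qx]] := eigvec _ _ Qs (hd i).
  have := hQ x xn0; rewrite Qx dotZr pmulr_lgt0 //; exact: dot_gt0.
pose S := 1 + \sum_i (d i)^-1.
have Sge i : (d i)^-1 <= S.
  rewrite /S (bigD1 i) //= addrCA lerDl; apply: addr_ge0 => //.
  by apply: sumr_ge0 => j _; rewrite invr_ge0 ltW.
have S0 : 0 < S.
  rewrite /S ltr_pwDl //; apply: sumr_ge0 => j _; rewrite invr_ge0 ltW //.
exists S^-1; first by rewrite invr_gt0.
move=> x; have [c [c0 -> ->]] := hx x.
rewrite mulr_sumr; apply: ler_sum => i _; rewrite ler_wpM2r //.
have := Sge i; have := dpos i; move: (d i) => e e0 h.
have h1 : e^-1 * e = 1 by rewrite mulVf // gt_eqF.
have h2 : S^-1 * S = 1 by rewrite mulVf // gt_eqF.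
have h3 : 0 < S^-1 by rewrite invr_gt0.
nra.
Qed.

Variables (M : 'M[R]_n) (beta : 'cV[R]_n) (gamma : R).
Hypothesis Ms : M^T = M.
Local Notation g := (fun x => dot x (M *m x) - 2 * dot beta x + gamma).

Lemma g_expand x w : g (x + w) = g x + 2 * dot (M *m x - beta) w + dot w (M *m w).
Proof.
rewrite /= mulmxDr !dotDl !dotDr dotNl (dotC (M *m x) w) (dotMs _ w x Ms) (dotC beta w); ring.
Qed.

Lemma ball_lemma lam xc :
  0 <= lam -> (forall w, dot w (M *m w) <= lam * dot w w) ->
  g xc <= 0 -> M *m xc - beta != 0 ->
  lam * Num.sqrt n%:R / 2 <= norm2 (M *m xc - beta) ->
  exists p, [/\ int_vec p, g p <= 0 & norm2 (p - xc) <= Num.sqrt n%:R].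
Proof.
move=> lam0 hlam gxc vn0 hN.
set v := M *m xc - beta in vn0 hN *.
set N := norm2 v in hN.
have N0 : 0 < N by rewrite /N /norm2 sqrtr_gt0 dot_gt0.
have NN : N ^+ 2 = dot v v by rewrite norm2_sq.
pose rho : R := Num.sqrt n%:R / 2.
have rho0 : 0 <= rho by rewrite divr_ge0 // sqrtr_ge0.
have rr : rho ^+ 2 * 4 = n%:R by rewrite /rho expr_div_n sqr_sqrtr // ?ler0n; field.
pose c := xc - (rho / N) *: v.
have cE : c = xc - (rho / N) *: v by [].
clearbody c.
pose p := \col_i ((Num.floor (c i 0 + 2^-1))%:~R : R).
pose z := p - c.
have zi i : z i 0 ^+ 2 * 4 <= 1.
  rewrite /z /p !mxE; have := floor_itv (c i 0 + 2^-1).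
  move: (Num.floor _) => m /andP [h1 h2]; rewrite intrD in h2.
  rewrite (_ : (1 : int)%:~R = 1 :> R) // in h2.
  move: (m%:~R : R) h1 h2 => mm h1 h2.
  have h : (2:R)^-1 * 2 = 1 by rewrite mulVf // pnatr_eq0.
  nra.
have zz : dot z z <= rho ^+ 2.
  rewrite -(@ler_pM2r _ 4) // rr /dotv mulr_suml.
  have -> : n%:R = \sum_(i < n) (1 : R) by rewrite sumr_const card_ord.
  by apply: ler_sum => i _; rewrite -expr2.
set s := dot v z.
have ss : s ^+ 2 <= N ^+ 2 * rho ^+ 2.
  apply: le_trans (CS v z) _; rewrite NN ler_wpM2l ?dot_ge0 //.
pose sig := s / N.
have hs : s = sig * N by rewrite /sig mulfVK // gt_eqF.
have sig2 : sig ^+ 2 <= rho ^+ 2.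
  by move: ss; rewrite hs exprMn mulrC ler_pM2l // exprn_gt0.
have sigr : sig <= rho /\ - rho <= sig by split; nra.
pose k := rho / N.
have kN : k * N = rho by rewrite /k mulfVK // gt_eqF.
pose w := p - xc.
have wE : w = z - k *: v by rewrite /w /z cE; apply/matrixP => i j; rewrite !mxE; ring.
have wdef : w = p - xc by [].
clearbody w z.
have dvw : dot v w = s - k * N ^+ 2.
  by rewrite wE dotBr dotZr -NN.
have dww : dot w w = dot z z - 2 * k * s + k ^+ 2 * N ^+ 2.
  by rewrite wE dotBl !dotBr !dotZl !dotZr (dotC z v) -/s NN; ring.
have hw := hlam w.
have hL : lam * rho <= N by move: hN; rewrite /rho mulrA.
exists p; split.
- by move=> i; rewrite mxE intr_int.
- have -> : p = xc + w by rewrite wdef addrC subrK.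
  rewrite g_expand -/v dvw.
  have e1 : s - k * N ^+ 2 = sig * N - rho * N by rewrite hs -kN; ring.
  have e2 : dot w w = dot z z - 2 * rho * sig + rho ^+ 2.
    by rewrite dww hs -kN; ring.
  rewrite e1; rewrite e2 in hw.
  case: sigr => sr1 sr2.
  have h1 : 0 <= (rho - sig) * (N - lam * rho) by rewrite mulr_ge0 // subr_ge0.
  have h2 : lam * dot z z <= lam * rho ^+ 2 by rewrite ler_wpM2l.
  move: gxc => /= gxc; nra.
- rewrite -wdef /norm2 ler_sqrt ?ler0n //.
  have e2 : dot w w = dot z z - 2 * rho * sig + rho ^+ 2.
    by rewrite dww hs -kN; ring.
  rewrite e2 -rr; case: sigr => sr1 sr2; nra.
Qed.

Lemma kkt alpha xh : (forall y, 0 <= dot y (M *m y)) -> g xh <= 0 ->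
  (forall x, g x <= 0 -> dot alpha xh <= dot alpha x) -> M *m xh - beta != 0 ->
  exists2 a, a <= 0 & alpha = a *: (M *m xh - beta).
Proof.
move=> psd gxh hmin vn0; set v := M *m xh - beta in vn0 *.
have hw w : dot v w < 0 -> 0 <= dot alpha w.
  move=> vw; rewrite leNgt; apply/negP => aw.
  set q := dot w (M *m w).
  have q0 : 0 <= q by apply: psd.
  pose t := - dot v w / (q + 1).
  have t0 : 0 < t by rewrite /t divr_gt0 ?oppr_gt0 //; lra.
  have tq : t * (q + 1) = - dot v w by rewrite /t mulfVK //; apply/lt0r_neq0; lra.
  have := hmin (xh + t *: w); rewrite g_expand -/v -scalemxAr !dotZr dotZl.
  rewrite dotDr dotZr => h.
  have : 0 <= t * dot alpha w.
    rewrite -(lerD2l (dot alpha xh)) addr0; apply: h.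
    have e : 2 * (t * dot v w) + t * (t * q) = t * (2 * dot v w + t * q) by ring.
    have : t * (2 * dot v w + t * q) <= 0 by rewrite pmulr_rle0 //; nra.
    move: gxh => /= gxh; rewrite -/q; lra.
  rewrite pmulr_rge0 //; lra.
have vv : 0 < dot v v by apply: dot_gt0.
pose a := dot alpha v / dot v v.
pose pp := alpha - a *: v.
have vp : dot v pp = 0.
  rewrite /pp dotBr dotZr /a (dotC v alpha) mulfVK ?subrr // gt_eqF //.
have ap : dot alpha pp = dot pp pp.
  by rewrite {2}/pp dotBl dotZl vp mulr0 subr0.
have key r : 0 <= - dot alpha v - r * dot pp pp.
  have := hw (- v - r *: pp); rewrite dotBr dotNr dotZr vp mulr0 subr0.
  rewrite oppr_lt0 => /(_ vv); rewrite dotBr dotNr dotZr ap //.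
have P0 : dot pp pp = 0.
  apply/eqP; rewrite eq_le dot_ge0 andbT leNgt; apply/negP => Pp.
  have := key ((`|dot alpha v| + 1) / dot pp pp); rewrite mulfVK ?gt_eqF //.
  have := ler_norm (- dot alpha v); rewrite normrN; lra.
have ppe := dot_eq0 _ P0.
exists a; last by move: ppe; rewrite /pp => /eqP; rewrite subr_eq0 => /eqP.
have := key 0; rewrite P0 mulr0 subr0 oppr_ge0 /a => h.
by rewrite pmulr_lle0 // invr_gt0.
Qed.

Lemma vvT_mul v x : (v *m v^T) *m x = dot v x *: v.
Proof.
by rewrite -mulmxA (mx11_scalar (v^T *m x)) -dotE mul_mx_scalar.
Qed.

Lemma bound_lemma (u xh alpha x0 : 'cV[R]_n) (a : R) :
  (forall y, 0 <= dot y (M *m y)) -> \rank M = n.-1 -> M *m u = 0 ->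
  dot u u = 1 -> 0 < dot beta u -> g xh <= 0 -> a < 0 ->
  alpha = a *: (M *m xh - beta) -> dot alpha xh <= dot alpha x0 ->
  exists K : nat, forall y, g y <= 0 -> dot alpha y <= dot alpha x0 ->
    forall i, `|y i 0| <= K%:R.
Proof.
move=> psd rk Mu uu bu gxh a0 ha hx0.
set v := M *m xh - beta in ha.
pose Q := M + v *m v^T.
have Qs : Q^T = Q by rewrite /Q linearD /= Ms trmx_mul trmxK.
have QE x : dot x (Q *m x) = dot x (M *m x) + dot v x ^+ 2.
  by rewrite /Q mulmxDl vvT_mul dotDr dotZr (dotC x v) expr2.
have vu : dot v u = - dot beta u.
  by rewrite /v dotBl (dotC (M *m xh) u) (dotMs _ _ _ Ms) Mu dot0r add0r.
have Qpos x : x != 0 -> 0 < dot x (Q *m x).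
  move=> xn0; rewrite QE; rewrite lt_def addr_ge0 ?psd ?sqr_ge0 // andbT.
  apply: contra xn0 => /eqP h.
  have h1 : dot x (M *m x) = 0.
    by apply/eqP; rewrite eq_le psd andbT -h lerDl sqr_ge0.
  have h2 : dot v x = 0.
    by apply/eqP; rewrite -sqrf_eq0 eq_le sqr_ge0 andbT -h lerDr psd.
  have Mx := psd_ker _ _ Ms psd h1.
  have xe := ker1 _ _ _ Ms rk Mu uu Mx.
  move: h2; rewrite {1}xe dotZr vu mulrN => /eqP; rewrite oppr_eq0 mulf_eq0 => /orP [/eqP e|].
    by rewrite xe e scale0r.
  by rewrite gt_eqF.
have [mu mu0 hmu] := posdef_bound _ Qs Qpos.
pose C := dot alpha x0 - dot alpha xh.
have C0 : 0 <= C by rewrite /C subr_ge0.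
pose k := - a.
have k0 : 0 < k by rewrite /k oppr_gt0.
pose D1 := - g xh / 2.
have D10 : 0 <= D1 by rewrite /D1 divr_ge0 // oppr_ge0.
pose D2 := C / k.
have D20 : 0 <= D2 by rewrite /D2 divr_ge0 // ltW.
have kD2 : k * D2 = C by rewrite /D2 mulrC mulfVK // gt_eqF.
pose E := 2 * D1 + 2 * D2 + D1 ^+ 2 + D2 ^+ 2.
pose B := 1 + 2 * dot xh xh + 2 * (E / mu).
have E0 : 0 <= E by rewrite /E; have := sqr_ge0 D1; have := sqr_ge0 D2; lra.
have Emu : 0 <= E / mu by rewrite divr_ge0 // ltW.
have B0 : 0 <= B by rewrite /B; have := dot_ge0 xh; lra.
exists (Num.Def.archi_bound B) => y gy ay i.
apply: le_trans (ltW (archi_boundP B0)).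
pose w := y - xh.
have yE : y = xh + w by rewrite /w addrC subrK.
clearbody w.
move: gy; rewrite yE g_expand -/v => gy.
have aw : a * dot v w <= C.
  by move: ay; rewrite /C yE dotDr ha !dotZl; lra.
have hMw := psd w.
have vw1 : dot v w <= D1 by rewrite /D1; move: gxh => /= gxh; lra.
have vw2 : - D2 <= dot v w.
  have : k * (- D2) <= k * dot v w by rewrite /k mulrN kD2; lra.
  by rewrite ler_pM2l.
have vw3 : dot v w ^+ 2 <= D1 ^+ 2 + D2 ^+ 2.
  have := sqr_ge0 D1; have := sqr_ge0 D2.
  case: (lerP 0 (dot v w)) => h; nra.
have Mw : dot w (M *m w) <= 2 * D1 + 2 * D2.
  have hD : 2 * D1 = - g xh by rewrite /D1; field.
  by move: hD gy => /= hD gy; lra.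
have ww : mu * dot w w <= E by apply: le_trans (hmu w) _; rewrite QE /E; lra.
have ww' : dot w w <= E / mu by rewrite ler_pdivlMr // mulrC.
have yy : dot y y <= 2 * dot xh xh + 2 * dot w w.
  have := dot_ge0 (xh - w); rewrite yE !(dotDl, dotDr, dotNl, dotNr) (dotC w xh); lra.
have yi := coord_le y i.
have : `|y i 0| <= 1 + y i 0 ^+ 2.
  case: (lerP 0 (y i 0)) => h; [rewrite ger0_norm // | rewrite ltr0_norm //]; nra.
rewrite -yE /B; lra.
Qed.
End Geo.

Section Fin.
Context {R : realType} {n : nat}.

Lemma fin_min (P : pred 'cV[R]_n) (F : 'cV[R]_n -> R) (K : nat) x0 :
  int_vec x0 -> P x0 ->
  (forall y, int_vec y -> P y -> F y <= F x0 -> forall i, `|y i 0| <= K%:R) ->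
  exists xz, [/\ int_vec xz, P xz & forall y, int_vec y -> P y -> F xz <= F y].
Proof.
move=> I0 P0 hB.
pose emb (f : {ffun 'I_n -> 'I_(K.*2.+1)}) : 'cV[R]_n :=
  \col_i (((f i : nat)%:R : R) - K%:R).
have embI f : int_vec (emb f) by move=> i; rewrite mxE rpredB // natr_int.
have surj y : int_vec y -> (forall i, `|y i 0| <= K%:R) -> exists f, emb f = y.
  move=> Iy By.
  exists [ffun i => inord (Num.trunc (y i 0 + K%:R))].
  apply/matrixP => i j; rewrite ord1 !mxE ffunE.
  have hn : y i 0 + K%:R \is a Num.nat.
    rewrite natrEint rpredD ?natr_int //=.
    by have := By i; rewrite ler_norml; lra.
  rewrite inordK; first by rewrite truncnK // addrK.
  rewrite ltnS -(ler_nat R) truncnK // -mul2n natrM.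
  by have := By i; rewrite ler_norml; lra.
have [f0 hf0] := surj x0 I0 (hB x0 I0 P0 (lexx _)).
pose Q := [pred f | P (emb f) && (F (emb f) <= F x0)].
have Qf0 : Q f0 by rewrite /= hf0 P0 lexx.
case: (arg_minP (fun f => F (emb f)) Qf0) => fm /andP [Pm Fm] hm.
exists (emb fm); split => // y Iy Py.
have [Fy|Fy] := lerP (F y) (F x0).
  have [f hf] := surj y Iy (hB y Iy Py Fy).
  by rewrite -hf; apply: hm; rewrite /= hf Py Fy.
by apply: le_trans Fm (ltW Fy).
Qed.
End Fin.

Lemma dot_ge_norm {R : realType} {n : nat} (a b : 'cV[R]_n) :
  - (norm2 a * norm2 b) <= dotv a b.
Proof.
have := dot_le_norm (- a) b; rewrite dotNl.
have -> : norm2 (- a) = norm2 a by rewrite /norm2 dotNl dotNr opprK.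
lra.
Qed.

Theorem proposition6p4 (R : realType) (n : nat) (M : 'M[R]_n)
    (beta : 'cV[R]_n) (gamma lambda1 : R) (un : 'cV[R]_n) :
  paraboloid_data M beta ->
  largest_eigenvalue M lambda1 ->
  norm2 un = 1 -> M *m un = 0 -> 0 < dotv beta un ->
  (* (i) *)
  (forall xc : 'cV[R]_n,
      boundary_pt (in_par M beta gamma) xc ->
      lambda1 * Num.sqrt (n%:R) / 2 <= norm2 (M *m xc - beta) ->
      exists x : 'cV[R]_n,
        [/\ int_vec x, in_par M beta gamma x & norm2 (x - xc) <= Num.sqrt (n%:R)])
  /\
  (* (ii) *)
  (forall alpha xh : 'cV[R]_n,
      0 < dotv un alpha ->
      in_par M beta gamma xh ->
      (forall x, in_par M beta gamma x -> dotv alpha xh <= dotv alpha x) ->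
      ((dotv un alpha * (lambda1 * Num.sqrt (n%:R) / 2) <= dotv un beta * norm2 alpha)
         <-> lambda1 * Num.sqrt (n%:R) / 2 <= norm2 (M *m xh - beta))
      /\
      (lambda1 * Num.sqrt (n%:R) / 2 <= norm2 (M *m xh - beta) ->
       exists xz : 'cV[R]_n,
         [/\ int_vec xz, in_par M beta gamma xz,
             (forall y, int_vec y -> in_par M beta gamma y -> dotv alpha xz <= dotv alpha y)
           & dotv alpha xz - dotv alpha xh <= norm2 alpha * Num.sqrt (n%:R)])).
Proof.
move=> [Ms psd rk nosol] [ev1 hmax] hu Mu bu.
have uu : dotv un un = 1 by rewrite -norm2_sq hu expr1n.
have lam0 : 0 <= lambda1.
  have [x [xn0 Mx]] := eigvec _ _ Ms ev1.
  by have := psd x; rewrite Mx dotZr pmulr_lge0 //; exact: dot_gt0.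
have hlam := rayleigh_up _ _ Ms hmax.
have vn0 x : M *m x - beta != 0.
  by apply/eqP => /eqP; rewrite subr_eq0 => /eqP h; apply: nosol; exists x.
split.
- move=> xc hb hN.
  have gxc : in_par M beta gamma xc.
    rewrite /in_par leNgt; apply/negP => gpos.
    set v := M *m xc - beta.
    set G := dotv xc (M *m xc) - 2 * dotv beta xc + gamma in gpos.
    have N0 := norm2_ge0 v.
    pose e := G / (2 * norm2 v + 1).
    have e0 : 0 < e by rewrite divr_gt0 //; lra.
    have ee : e * (2 * norm2 v + 1) = G by rewrite mulfVK //; apply: lt0r_neq0; lra.
    have [[y [Sy hy]] _] := hb e e0.
    move: Sy; rewrite /in_par.
    have E := g_expand M beta gamma Ms xc (y - xc); simpl in E.
    rewrite (_ : xc + (y - xc) = y) in E; last by rewrite addrC subrK.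
    rewrite E -/v -/G.
    have := dot_ge_norm v (y - xc).
    have := psd (y - xc).
    have : norm2 v * norm2 (y - xc) <= norm2 v * e by rewrite ler_wpM2l // ltW.
    lra.
  exact: (ball_lemma M beta gamma Ms lambda1 xc lam0 hlam gxc (vn0 xc) hN).
- move=> alpha xh ua Sxh hmin.
  have [a a0 ha] := kkt M beta gamma Ms alpha xh psd Sxh hmin (vn0 xh).
  set v := M *m xh - beta in ha *.
  have uv : dotv un v = - dotv beta un.
    by rewrite /v dotBr (dotMs _ un xh Ms) Mu dot0r add0r (dotC un beta).
  have ua' : dotv un alpha = - a * dotv beta un by rewrite ha dotZr uv mulrN mulNr.
  have an : 0 < - a by move: ua; rewrite ua' pmulr_lgt0.
  have na : norm2 alpha = - a * norm2 v.
    rewrite ha /norm2 dotZl dotZr mulrA -expr2 sqrtrM ?sqr_ge0 //.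
    by rewrite sqrtr_sqr ler0_norm.
  split.
    rewrite ua' na (dotC un beta).
    have -> : dotv beta un * (- a * norm2 v) = (- a * dotv beta un) * norm2 v by ring.
    by rewrite ler_pM2l ?mulr_gt0.
  move=> hN.
  have [x0 [I0 S0 d0]] := ball_lemma M beta gamma Ms lambda1 xh lam0 hlam Sxh (vn0 xh) hN.
  have hx0 : dotv alpha xh <= dotv alpha x0 := hmin x0 S0.
  have aneg : a < 0 by lra.
  have [K hK] := bound_lemma M beta gamma Ms un xh alpha x0 a psd rk Mu uu bu Sxh aneg ha hx0.
  have [xz [Iz Sz mz]] := fin_min
     [pred y | dotv y (M *m y) - 2 * dotv beta y + gamma <= 0] (dotv alpha) K x0 I0 S0
     (fun y _ Sy Fy => hK y Sy Fy).
  exists xz; split => //.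
  have := mz x0 I0 S0.
  have := dot_le_norm alpha (x0 - xh); rewrite dotBr.
  have := ler_wpM2l (norm2_ge0 alpha) d0.
  lra.
Qed.
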